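(* Let $V$ be a finite-dimensional real vector space, $\phi\in\mathrm{End}(V)\setminus\{0\}$, $W=\mathrm{im}(\phi)$, $\alpha\in V^*$ and $c\in C_{sl}(W)$. Then the Lie quasi-state $\zeta_{\alpha,c}$ on $\mathfrak{g}_\phi$ is invariant under the adjoint group of $\mathfrak{g}_\phi$ if and only if (i) $\mathrm{im}\,\phi\subset\ker\alpha$, and (ii) $c$ is constant on cosets of $\mathrm{im}\,\phi^2$ in $W$, i.e. $c(w+u)=c(w)$ for all $w\in W$, $u\in\mathrm{im}\,\phi^2$ (so $c$ descends to a function on $W/\mathrm{im}\,\phi^2$).
   Context: $\mathfrak{g}_\phi$ is $V\times\mathbb{R}$ with bracket $[(v,s),(w,t)]=(s\phi(w)-t\phi(v),0)$. $C_{sl}(W)$ is the space of continuous functions $c:W\to\mathbb{R}$ with $c(w)/\|w\|\to0$ as $w\to\infty$. $\zeta_{\alpha,c}:\mathfrak{g}_\phi\to\mathbb{R}$ is defined by $\zeta_{\alpha,c}(v,t)=c(\phi(v)/t)\,t+\alpha(v)$ for $t\ne0$ and $\zeta_{\alpha,c}(v,0)=\alpha(v)$; it is a continuous Lie quasi-state (a function linear on every abelian subalgebra). Ad-invariance means $\zeta(\exp(\mathrm{ad}(Y))X)=\zeta(X)$ for all $X,Y\in\mathfrak{g}_\phi$. *)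

(* Defs.v *)
From Stdlib Require Import Reals.
From mathcomp Require Import ssreflect ssrfun ssrbool eqtype ssrnat seq fintype bigop.
Set Implicit Arguments.
Unset Strict Implicit.

Open Scope R_scope.

Definition vec (n : nat) := 'I_n -> R.

Definition vadd {n} (v w : vec n) : vec n := fun i => v i + w i.
Definition vscale {n} (a : R) (v : vec n) : vec n := fun i => a * v i.
Definition vsub {n} (v w : vec n) : vec n := fun i => v i - w i.
Definition vzero {n} : vec n := fun _ => 0.

Definition vnorm {n} (v : vec n) : R := sqrt (\big[Rplus/R0]_(i < n) (v i * v i)).

Definition is_linear {n} (f : vec n -> vec n) : Prop :=
  (forall v w, f (vadd v w) = vadd (f v) (f w)) /\
  (forall a v, f (vscale a v) = vscale a (f v)).

Definition is_linear_form {n} (a : vec n -> R) : Prop :=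
  (forall v w, a (vadd v w) = a v + a w) /\
  (forall s v, a (vscale s v) = s * a v).

Definition in_image {n} (phi : vec n -> vec n) (w : vec n) : Prop :=
  exists v, w = phi v.

(* c : W -> R is represented by a function on V; only its values on W = im phi matter.
   C_sl(W): continuous on W and c(w)/||w|| -> 0 as w -> infinity in W. *)
Definition C_sl {n} (phi : vec n -> vec n) (c : vec n -> R) : Prop :=
  (forall w, in_image phi w -> forall eps, eps > 0 -> exists delta, delta > 0 /\
     forall w', in_image phi w' -> vnorm (vsub w' w) < delta -> Rabs (c w' - c w) < eps) /\
  (forall eps, eps > 0 -> exists M, forall w, in_image phi w -> M < vnorm w ->
     Rabs (c w) / vnorm w < eps).

Definition gphi (n : nat) := (vec n * R)%type.

Definition bracket {n} (phi : vec n -> vec n) (X Y : gphi n) : gphi n :=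
  let (v, s) := X in let (w, t) := Y in
  (vsub (vscale s (phi w)) (vscale t (phi v)), 0).

Definition ad {n} (phi : vec n -> vec n) (Y : gphi n) (X : gphi n) : gphi n :=
  bracket phi Y X.

Definition ad_pow {n} (phi : vec n -> vec n) (Y : gphi n) (k : nat) (X : gphi n) : gphi n :=
  Nat.iter k (ad phi Y) X.

Definition exp_ad_is {n} (phi : vec n -> vec n) (Y X Z : gphi n) : Prop :=
  (forall i : 'I_n, infinite_sum (fun k => (fst (ad_pow phi Y k X)) i / INR (Factorial.fact k)) ((fst Z) i)) /\
  infinite_sum (fun k => snd (ad_pow phi Y k X) / INR (Factorial.fact k)) (snd Z).

Definition zeta {n} (phi : vec n -> vec n) (alpha : vec n -> R) (c : vec n -> R)
  (X : gphi n) : R :=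
  let (v, t) := X in
  if Req_EM_T t 0 then alpha v
  else c (vscale (/ t) (phi v)) * t + alpha v.

(* invariance under the adjoint group (generated by the exp(ad Y)) *)
Definition ad_invariant {n} (phi : vec n -> vec n) (f : gphi n -> R) : Prop :=
  forall X Y Z : gphi n, exp_ad_is phi Y X Z -> f Z = f X.

(* Main.v *)
Require Import Defs.
From Stdlib Require Import Reals Lra FunctionalExtensionality.
From mathcomp Require Import ssreflect ssrfun ssrbool eqtype ssrnat seq fintype bigop.
Open Scope R_scope.

Lemma lin_scale n (f : vec n -> vec n) a x : is_linear f -> f (vscale a x) = vscale a (f x).
Proof. by case=> _ ->. Qed.
Lemma lin_add n (f : vec n -> vec n) x y : is_linear f -> f (vadd x y) = vadd (f x) (f y).
Proof. by case=> ->. Qed.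
Lemma vsub_eq n (x y : vec n) : vsub x y = vadd x (vscale (-1) y).
Proof. apply functional_extensionality=> i; rewrite /vsub/vadd/vscale; ring. Qed.
Lemma vscale1 n (x : vec n) : vscale 1 x = x.
Proof. apply functional_extensionality=> i; rewrite /vscale; ring. Qed.
Lemma lin_sub n (f : vec n -> vec n) x y : is_linear f -> f (vsub x y) = vsub (f x) (f y).
Proof. move=> H; by rewrite !vsub_eq lin_add // lin_scale. Qed.
Lemma lin_zero n (f : vec n -> vec n) : is_linear f -> f vzero = vzero.
Proof.
move=> H; have -> : (vzero : vec n) = vscale 0 vzero.
  apply functional_extensionality=> i; rewrite /vscale/vzero; ring.
rewrite lin_scale //; apply functional_extensionality=> i; rewrite /vscale/vzero; ring.
Qed.
Lemma form_zero n (g : vec n -> R) : is_linear_form g -> g vzero = 0.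
Proof.
move=> [_ H]; have -> : (vzero : vec n) = vscale 0 vzero.
  apply functional_extensionality=> i; rewrite /vscale/vzero; ring.
rewrite H; ring.
Qed.
Lemma form_sub n (g : vec n -> R) x y : is_linear_form g -> g (vsub x y) = g x - g y.
Proof. move=> [H1 H2]; rewrite vsub_eq H1 H2; ring. Qed.

Lemma comp_form n (f : vec n -> vec n) (a : R) (j : 'I_n) :
  is_linear f -> is_linear_form (fun y => a * f y j).
Proof.
move=> H; split=> [x y|s x]; [rewrite lin_add // /vadd | rewrite lin_scale // /vscale]; ring.
Qed.

Lemma cv_const (a : R) : Un_cv (fun _ => a) a.
Proof. move=> e He; exists 0%nat => k _; rewrite Rdist_eq; lra. Qed.

Definition ebase {n} (a : 'I_n) : vec n := fun j => if j == a then 1 else 0.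
Definition proj {n} (r : seq 'I_n) (x : vec n) : vec n := fun j => if j \in r then x j else 0.

Lemma proj_cons n (a : 'I_n) r x : a \notin r ->
  proj (a :: r) x = vadd (vscale (x a) (ebase a)) (proj r x).
Proof.
move=> Ha; apply functional_extensionality => j; rewrite /proj /vadd /vscale /ebase in_cons.
case: (j =P a) => [->|_] /=.
  rewrite (negbTE Ha); ring.
ring.
Qed.

Lemma form_cont n (g : vec n -> R) (x : nat -> vec n) (y : vec n) :
  is_linear_form g -> (forall i, Un_cv (fun N => x N i) (y i)) ->
  Un_cv (fun N => g (x N)) (g y).
Proof.
move=> Hg Hx.
have Hkey : forall r, uniq r -> Un_cv (fun N => g (proj r (x N))) (g (proj r y)).
  elim=> [|a r IH] /=.
    move=> _; have E : forall z : vec n, proj [::] z = vzero.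
      by move=> z; apply functional_extensionality => j.
    rewrite E; have -> : (fun N => g (proj [::] (x N))) = (fun _ => g vzero).
      by apply functional_extensionality => N; rewrite E.
    exact: cv_const.
  move=> /andP [Ha Hr].
  have -> : (fun N => g (proj (a :: r) (x N))) =
     (fun N => x N a * g (ebase a) + g (proj r (x N))).
    apply functional_extensionality => N; rewrite proj_cons //.
    by case: Hg => H1 H2; rewrite H1 H2.
  rewrite proj_cons // (proj1 Hg) (proj2 Hg).
  apply: CV_plus; last exact: IH.
  apply: CV_mult; [exact: Hx | exact: cv_const].
have E : forall z : vec n, proj (index_enum 'I_n) z = z.
  by move=> z; apply functional_extensionality => j; rewrite /proj mem_index_enum.
have := Hkey _ (index_enum_uniq 'I_n).
rewrite E.
have -> : (fun N => g (proj (index_enum 'I_n) (x N))) = (fun N => g (x N)).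
  by apply functional_extensionality => N; rewrite E.
done.
Qed.

Lemma sumsq_ge0 n (r : seq 'I_n) (u : vec n) : 0 <= \big[Rplus/0]_(i <- r) (u i * u i).
Proof.
elim: r => [|a r IH]; first by rewrite big_nil; lra.
rewrite big_cons; have := Rle_0_sqr (u a); rewrite /Rsqr; lra.
Qed.

Lemma vnorm_cv n (x : nat -> vec n) (y : vec n) :
  (forall i, Un_cv (fun N => x N i) (y i)) ->
  Un_cv (fun N => vnorm (vsub (x N) y)) 0.
Proof.
move=> Hx.
have Hkey : forall r : seq 'I_n, Un_cv (fun N => \big[Rplus/0]_(i <- r) (vsub (x N) y i * vsub (x N) y i)) 0.
  elim=> [|a r IH].
    have -> : (fun N => \big[Rplus/0]_(i <- [::]) (vsub (x N) y i * vsub (x N) y i)) = (fun _ => 0).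
      by apply functional_extensionality => N; rewrite big_nil.
    exact: cv_const.
  have -> : (fun N => \big[Rplus/0]_(i <- a :: r) (vsub (x N) y i * vsub (x N) y i)) =
    (fun N => (vsub (x N) y a * vsub (x N) y a) + \big[Rplus/0]_(i <- r) (vsub (x N) y i * vsub (x N) y i)).
    by apply functional_extensionality => N; rewrite big_cons.
  have Ha : Un_cv (fun N => vsub (x N) y a) 0.
    have -> : 0 = y a - y a by ring.
    rewrite /vsub; apply: CV_minus; [exact: Hx | exact: cv_const].
  have := CV_mult _ _ _ _ Ha Ha; rewrite Rmult_0_l => H1.
  by have := CV_plus _ _ _ _ H1 IH; rewrite Rplus_0_r.
move=> e He.
have He2 : e * e > 0 by apply Rmult_lt_0_compat.
case: (Hkey (index_enum 'I_n) _ He2) => N HN.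
exists N => k Hk; have := HN k Hk.
rewrite /Rdist /vnorm !Rminus_0_r.
set S := \big[Rplus/0]_(i <- _) _.
have HS : 0 <= S by apply: sumsq_ge0.
rewrite (Rabs_pos_eq S HS) Rabs_pos_eq; last exact: sqrt_pos.
move=> H; rewrite -(sqrt_square e); last lra.
apply: sqrt_lt_1_alt; lra.
Qed.

Lemma vnorm_scale n (l : R) (u : vec n) : vnorm (vscale l u) = Rabs l * vnorm u.
Proof.
rewrite /vnorm.
have E : forall r : seq 'I_n, \big[Rplus/0]_(i <- r) (vscale l u i * vscale l u i)
   = (l * l) * \big[Rplus/0]_(i <- r) (u i * u i).
  elim=> [|a r IH]; first by rewrite !big_nil; ring.
  rewrite !big_cons IH /vscale; ring.
rewrite E sqrt_mult; first by rewrite -sqrt_Rsqr_abs.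
  have := Rle_0_sqr l; rewrite /Rsqr; lra.
exact: sumsq_ge0.
Qed.

Lemma vnorm_zero n (u : vec n) : vnorm u = 0 -> u = vzero.
Proof.
rewrite /vnorm => H.
have H0 := sqrt_eq_0 _ (@sumsq_ge0 n (index_enum 'I_n) u) H.
have Hall : forall r : seq 'I_n, \big[Rplus/0]_(i <- r) (u i * u i) = 0 -> forall i, i \in r -> u i = 0.
  elim=> [|a r IH] //= Hs i.
  move: Hs; rewrite big_cons in_cons => Hs.
  have Hr := @sumsq_ge0 n r u.
  have Ha := Rle_0_sqr (u a); rewrite /Rsqr in Ha.
  have Hua : u a * u a = 0 by lra.
  have Hs' : \big[Rplus/0]_(i <- r) (u i * u i) = 0 by lra.
  case/orP => [/eqP ->|Hi]; last exact: IH.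
  by case: (Rmult_integral _ _ Hua).
apply functional_extensionality => i; apply: (Hall _ H0); exact: mem_index_enum.
Qed.

Lemma sum_eventually (f : nat -> R) : (forall k, f (S (S k)) = 0) -> infinite_sum f (f 0%nat + f 1%nat).
Proof.
move=> Hf.
have E : forall N, sum_f_R0 f (S N) = f 0%nat + f 1%nat.
  elim=> [|N IH] //=. rewrite -/(sum_f_R0 f (S N)) IH Hf; ring.
move=> e He; exists 1%nat => k Hk.
case: k Hk => [|k] Hk; first by inversion Hk.
rewrite E Rdist_eq; lra.
Qed.

Lemma exp_Y0 n (phi : vec n -> vec n) v t w : is_linear phi ->
  exp_ad_is phi (w, 0) (v, t) (vsub v (vscale t (phi w)), t).
Proof.
move=> Hl.
have A2 : forall k, ad_pow phi (w, 0) (S (S k)) (v, t) = (vzero, 0).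
  move=> k.
  change (ad phi (w,0) (ad phi (w,0) (ad_pow phi (w, 0) k (v,t))) = (vzero, 0)).
  case: (ad_pow phi (w, 0) k (v,t)) => u r.
  rewrite /ad /bracket; f_equal; apply functional_extensionality => i; rewrite /vsub/vscale/vzero; ring.
split.
- move=> i.
  have -> : fst (vsub v (vscale t (phi w)), t) i =
     (fun k => fst (ad_pow phi (w, 0) k (v, t)) i / INR (Factorial.fact k)) 0%nat +
     (fun k => fst (ad_pow phi (w, 0) k (v, t)) i / INR (Factorial.fact k)) 1%nat.
    rewrite /= /vsub /vscale; field.
  apply: sum_eventually => k; rewrite A2 /Rdiv /vzero; cbn [fst]; ring.
- have -> : snd (vsub v (vscale t (phi w)), t) =
     (fun k => snd (ad_pow phi (w, 0) k (v, t)) / INR (Factorial.fact k)) 0%nat +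
     (fun k => snd (ad_pow phi (w, 0) k (v, t)) / INR (Factorial.fact k)) 1%nat.
    rewrite /=; field.
  apply: sum_eventually => k; rewrite A2 /Rdiv; cbn [snd]; ring.
Qed.
Unset Implicit Arguments.

Fixpoint Pseq n (phi : vec n -> vec n) (s t : R) (v w : vec n) (k : nat) : vec n :=
  match k with
  | O => vsub (vscale s v) (vscale t w)
  | S k => vscale s (phi (Pseq n phi s t v w k))
  end.

Fixpoint Qseq n (phi : vec n -> vec n) (s t : R) (v w : vec n) (N : nat) : vec n :=
  match N with
  | O => vzero
  | S N => vadd (Qseq n phi s t v w N) (vscale (/ INR (Factorial.fact (S N))) (Pseq n phi s t v w N))
  end.

Lemma apow n (phi : vec n -> vec n) s t v w : is_linear phi -> forall k,
  ad_pow phi (w, s) (S k) (v, t) = (phi (Pseq _ phi s t v w k), 0).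
Proof.
move=> Hl.
have Ls : forall a x, phi (vscale a x) = vscale a (phi x) by move=> a x; case: Hl => _ ->.
elim=> [|k IH].
  change (ad phi (w,s) (v,t) = (phi (Pseq _ phi s t v w 0), 0)).
  rewrite /ad /bracket /= lin_sub // !Ls //.
change (ad phi (w,s) (ad_pow phi (w, s) (S k) (v, t)) = (phi (Pseq _ phi s t v w (S k)), 0)).
rewrite IH /ad /bracket /= Ls; f_equal.
apply functional_extensionality => j; rewrite /vsub /vscale; ring.
Qed.

Lemma partial_fst n (phi : vec n -> vec n) s t v w : is_linear phi -> forall N i,
  sum_f_R0 (fun k => fst (ad_pow phi (w, s) k (v, t)) i / INR (Factorial.fact k)) N
  = vadd v (phi (Qseq _ phi s t v w N)) i.
Proof.
move=> Hl; elim=> [|N IH] i.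
  rewrite /= lin_zero // /vadd /vzero; field.
have sS : forall f N, sum_f_R0 f (S N) = sum_f_R0 f N + f (S N) by [].
rewrite sS IH; cbv beta; rewrite apow //.
rewrite (_ : Qseq n phi s t v w (S N) = vadd (Qseq n phi s t v w N) (vscale (/ INR (Factorial.fact (S N))) (Pseq n phi s t v w N))) // (proj1 Hl) (proj2 Hl) /vadd /vscale /Rdiv; cbn [fst]; ring.
Qed.

Lemma partial_snd n (phi : vec n -> vec n) s t v w : is_linear phi -> forall N,
  sum_f_R0 (fun k => snd (ad_pow phi (w, s) k (v, t)) / INR (Factorial.fact k)) N = t.
Proof.
move=> Hl; elim=> [|N IH].
  rewrite /=; field.
have sS : forall f N, sum_f_R0 f (S N) = sum_f_R0 f N + f (S N) by [].
rewrite sS IH; cbv beta; rewrite apow // /Rdiv; cbn [snd]; ring.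
Qed.

Lemma forward n (phi : vec n -> vec n) (alpha : vec n -> R) (c : vec n -> R)
  (Hphi : is_linear phi) (Halpha : is_linear_form alpha) (Hc : C_sl phi c) :
  (forall v, alpha (phi v) = 0) ->
  (forall w u, in_image phi w -> in_image (fun x => phi (phi x)) u ->
      c (vadd w u) = c w) ->
  ad_invariant phi (zeta phi alpha c).
Proof.
move=> Hi Hii [v t] [w s] [z t'] [Hfst Hsnd].
have Ls : forall a x, phi (vscale a x) = vscale a (phi x) by move=> a x; case: Hphi => _ ->.
have La : forall x y, phi (vadd x y) = vadd (phi x) (phi y) by move=> x y; case: Hphi => ->.
have Ht : t' = t.
  apply: (UL_sequence (fun N => sum_f_R0 (fun k => snd (ad_pow phi (w, s) k (v, t)) / INR (Factorial.fact k)) N)).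
    exact: Hsnd.
  have -> : (fun N => sum_f_R0 (fun k => snd (ad_pow phi (w, s) k (v, t)) / INR (Factorial.fact k)) N) = (fun _ => t).
    apply functional_extensionality => N; exact: partial_snd.
  exact: cv_const.
set xN := fun N => vadd v (phi (Qseq n phi s t v w N)).
have Hx : forall i, Un_cv (fun N => xN N i) (z i).
  move=> i.
  have : Un_cv (fun N => sum_f_R0 (fun k => fst (ad_pow phi (w, s) k (v, t)) i / INR (Factorial.fact k)) N) (z i) := Hfst i.
  have -> : (fun N => sum_f_R0 (fun k => fst (ad_pow phi (w, s) k (v, t)) i / INR (Factorial.fact k)) N) = (fun N => xN N i).
    apply functional_extensionality => N; exact: partial_fst.
  done.
have Hal : alpha z = alpha v.
  have := @form_cont n alpha xN z Halpha Hx.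
  have -> : (fun N => alpha (xN N)) = (fun _ => alpha v).
    apply functional_extensionality => N; rewrite /xN (proj1 Halpha) Hi; ring.
  move=> H; apply: (UL_sequence _ _ _ H); exact: cv_const.
rewrite /zeta Ht; case: Req_EM_T => Ht0 //.
suff -> : c (vscale (/ t) (phi z)) = c (vscale (/ t) (phi v)) by rewrite Hal.
set wz := vscale (/ t) (phi z); set w0 := vscale (/ t) (phi v).
set xs := fun N => vscale (/ t) (phi (xN N)).
have Hxs : forall j, Un_cv (fun N => xs N j) (wz j).
  move=> j; exact (@form_cont n _ xN z (@comp_form n phi (/ t) j Hphi) Hx).
have Hn := vnorm_cv _ _ _ Hxs.
have Heq : forall N, c (xs N) = c w0.
  move=> N.
  have -> : xs N = vadd w0 (phi (phi (vscale (/ t) (Qseq n phi s t v w N)))).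
    rewrite /xs /xN /w0 La !Ls; apply functional_extensionality => j; rewrite /vadd /vscale; ring.
  apply: Hii.
    by exists (vscale (/ t) v); rewrite Ls.
  by exists (vscale (/ t) (Qseq n phi s t v w N)).
have Hwz : in_image phi wz by exists (vscale (/ t) z); rewrite Ls.
case: (Req_dec (c wz) (c w0)) => // Hne.
have He : Rabs (c wz - c w0) > 0 by apply: Rabs_pos_lt; lra.
case: (proj1 Hc wz Hwz _ He) => d [Hd Hcont].
case: (Hn d Hd) => N HN.
have HN' := HN N (le_n N).
rewrite /Rdist Rminus_0_r in HN'.
have Hv : vnorm (vsub (xs N) wz) < d by apply: Rle_lt_trans (RRle_abs _) HN'.
have Hin : in_image phi (xs N).
  by exists (vscale (/ t) (xN N)); rewrite /xs Ls.
have := Hcont (xs N) Hin Hv.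
rewrite Heq Rabs_minus_sym; lra.
Qed.

Lemma Rdiv_le_0_compat (x y : R) : 0 <= x -> 0 < y -> 0 <= x / y.
Proof. move=> Hx Hy; apply: Rmult_le_pos => //; apply: Rlt_le; exact: Rinv_0_lt_compat. Qed.

Lemma backward n (phi : vec n -> vec n) (alpha : vec n -> R) (c : vec n -> R)
  (Hphi : is_linear phi) (Halpha : is_linear_form alpha) (Hc : C_sl phi c) :
  ad_invariant phi (zeta phi alpha c) ->
  ((forall v, alpha (phi v) = 0) /\
   (forall w u, in_image phi w -> in_image (fun x => phi (phi x)) u ->
      c (vadd w u) = c w)).
Proof.
move=> H.
have Ls : forall a x, phi (vscale a x) = vscale a (phi x) by move=> a x; case: Hphi => _ ->.
have As : forall a x, alpha (vscale a x) = a * alpha x by move=> a x; case: Halpha => _ ->.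
have Hrel : forall v w, c (vsub (phi v) (phi (phi w))) = c (phi v) + alpha (phi w).
  move=> v w.
  have := H (v, 1) (w, 0) _ (exp_Y0 n phi v 1 w Hphi).
  rewrite /zeta; destruct (Req_EM_T 1 0) as [E|Ne]; first by exfalso; lra.
  rewrite Rinv_1 !vscale1 (lin_sub n phi) // (form_sub n alpha) //= ; lra.
have Hi : forall w0, alpha (phi w0) = 0.
  move=> w0.
  set u := phi (phi w0); set a := alpha (phi w0).
  have Hlam : forall l, c (vscale l u) = c vzero - l * a.
    move=> l; have := Hrel vzero (vscale (- l) w0).
    rewrite (lin_zero n phi Hphi) !Ls As.
    have -> : vsub vzero (vscale (- l) u) = vscale l u.
      apply functional_extensionality => i; rewrite /vsub /vzero /vscale; ring.
    rewrite -/u -/a; lra.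
  case: (Req_dec (vnorm u) 0) => Hu.
    have Hu0 := vnorm_zero n u Hu.
    have := Hlam 1; rewrite Hu0 vscale1; lra.
  have Nu : vnorm u > 0.
    have : 0 <= vnorm u by apply: sqrt_pos.
    lra.
  case: (Req_dec a 0) => // Ha.
  have HA : Rabs a > 0 by apply: Rabs_pos_lt.
  have He : Rabs a / (2 * vnorm u) > 0.
    apply: Rdiv_lt_0_compat => //; lra.
  case: (proj2 Hc _ He) => M HM.
  set C := Rabs (c vzero).
  set l := Rabs M / vnorm u + 2 * C / Rabs a + 1.
  have HC : 0 <= C by apply: Rabs_pos.
  have HMp : 0 <= Rabs M by apply: Rabs_pos.
  have P1 : 0 <= Rabs M / vnorm u by apply: Rdiv_le_0_compat.
  have P2 : 0 <= 2 * C / Rabs a by apply: Rdiv_le_0_compat; lra.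
  have Hl : l > 0 by rewrite /l; lra.
  have E1 : l * vnorm u = Rabs M + 2 * C * vnorm u / Rabs a + vnorm u.
    rewrite /l; field; split; lra.
  have P3 : 0 <= 2 * C * vnorm u / Rabs a.
    apply: Rdiv_le_0_compat; last lra.
    apply: Rmult_le_pos; lra.
  have E2 : l * Rabs a = Rabs M * Rabs a / vnorm u + 2 * C + Rabs a.
    rewrite /l; field; split; lra.
  have P4 : 0 <= Rabs M * Rabs a / vnorm u.
    apply: Rdiv_le_0_compat; last lra.
    apply: Rmult_le_pos; lra.
  have Hin : in_image phi (vscale l u) by exists (vscale l (phi w0)); rewrite Ls.
  have Hnorm : vnorm (vscale l u) = l * vnorm u by rewrite vnorm_scale Rabs_pos_eq //; lra.
  have HMl : M < vnorm (vscale l u).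
    rewrite Hnorm E1; have := RRle_abs M; lra.
  have := HM _ Hin HMl.
  rewrite Hnorm Hlam => Hlt.
  have Hpos : l * vnorm u > 0 by apply: Rmult_lt_0_compat.
  have Hlt2 : Rabs (c vzero - l * a) < Rabs a / (2 * vnorm u) * (l * vnorm u).
    have := Rmult_lt_compat_r _ _ _ Hpos Hlt.
    rewrite /Rdiv Rmult_assoc Rinv_l; last lra.
    by rewrite Rmult_1_r.
  have E3 : Rabs a / (2 * vnorm u) * (l * vnorm u) = l * Rabs a / 2.
    field; lra.
  rewrite E3 in Hlt2.
  have Htri := Rabs_triang_inv (l * a) (c vzero).
  rewrite Rabs_minus_sym in Hlt2.
  rewrite Rabs_mult (Rabs_pos_eq l) in Htri; last lra.
  rewrite -/C in Htri Hlt2.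
  lra.
split => // w u [v ->] [u0 ->].
have := Hrel v (vscale (-1) u0).
rewrite !Ls As Hi.
have -> : vsub (phi v) (vscale (-1) (phi (phi u0))) = vadd (phi v) (phi (phi u0)).
  apply functional_extensionality => i; rewrite /vsub /vadd /vscale; ring.
lra.
Qed.

Theorem mainTheorem11 (n : nat) (phi : vec n -> vec n) (alpha : vec n -> R)
  (c : vec n -> R)
  (Hphi : is_linear phi) (Hphi0 : exists v, phi v <> vzero)
  (Halpha : is_linear_form alpha) (Hc : C_sl phi c) :
  ad_invariant phi (zeta phi alpha c) <->
  ((forall v, alpha (phi v) = 0) /\
   (forall w u, in_image phi w -> in_image (fun x => phi (phi x)) u ->
      c (vadd w u) = c w)).
Proof.
split; first exact: backward.
case; exact: forward.
Qed.
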